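(* Let $k=h/2$, with $h(r)=2(r-r_+)+4M\log(r/r_+)+\frac{3M^2(r_+-r)^2}{r_+r^2}+2M\arctan\frac{(C_{\mathrm{hyp}}-1)M}{r}-2M\arctan\frac{(C_{\mathrm{hyp}}-1)M}{r_+}$ and $C_{\mathrm{hyp}}\ge1$. Then $t_{\mathrm{Hor}}=v-k(r)$ is a horizon crossing time function on the domain of outer communication of a subextreme Kerr spacetime, and $k(r_+)=0$.
   Context: Kerr spacetime with $M>0$, $|a|<M$, in ingoing Eddington–Finkelstein coordinates $(v,r,\theta,\phi)$ with metric $g_{ab}=-2(dr)_{(a}(dv)_{b)}+2a\sin^2\theta(d\phi)_{(a}(dr)_{b)}+\frac{4Mar\sin^2\theta}{\Sigma}(d\phi)_{(a}(dv)_{b)}+\frac{\Delta-a^2\sin^2\theta}{\Sigma}(dv)_a(dv)_b+\frac{a^2\sin^2\theta\Delta-(a^2+r^2)^2}{\Sigma}\sin^2\theta(d\phi)_a(d\phi)_b-\Sigma(d\theta)_a(d\theta)_b$, $\Sigma=r^2+a^2\cos^2\theta$, $\Delta=r^2-2Mr+a^2$, $r_+=M+\sqrt{M^2-a^2}$; the domain of outer communication is $\{r>r_+\}$. A function $t=v-k(r)$ is horizon crossing if (a) $k$ is smooth in an open neighbourhood of $[r_+,\infty)$, (b) the level sets of $t$ are strictly spacelike in $\{r>r_+\}$, and (c) for large $r$, $k'(r)-(a^2+r^2)/\Delta=O(r^{-2})$. *)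

(* Defs.v *)
From Stdlib Require Import Reals Lra.
From Coquelicot Require Import Coquelicot.
Open Scope R_scope.

Definition Sigma (a r th : R) : R := r ^ 2 + a ^ 2 * (cos th) ^ 2.
Definition Delta (M a r : R) : R := r ^ 2 - 2 * M * r + a ^ 2.
Definition rplus (M a : R) : R := M + sqrt (M ^ 2 - a ^ 2).

(* g(X,X) for X = Xv d/dv + Xr d/dr + Xth d/dth + Xph d/dph at a point with
   coordinates (v, r, th, ph); the metric components do not depend on v, ph.
   g_ab = -2 (dr)_(a (dv)_b) + 2 a sin^2 th (dph)_(a (dr)_b)
          + (4 M a r sin^2 th / Sigma) (dph)_(a (dv)_b)
          + (Delta - a^2 sin^2 th)/Sigma (dv)_a (dv)_b
          + (a^2 sin^2 th Delta - (a^2+r^2)^2)/Sigma sin^2 th (dph)_a (dph)_b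
          - Sigma (dth)_a (dth)_b *)
Definition kerr_g (M a r th Xv Xr Xth Xph : R) : R :=
  let S := Sigma a r th in
  let D := Delta M a r in
  let s2 := (sin th) ^ 2 in
  - 2 * Xr * Xv
  + 2 * a * s2 * Xph * Xr
  + (4 * M * a * r * s2 / S) * Xph * Xv
  + ((D - a ^ 2 * s2) / S) * Xv ^ 2
  + ((a ^ 2 * s2 * D - (a ^ 2 + r ^ 2) ^ 2) / S) * s2 * Xph ^ 2
  - S * Xth ^ 2.

Definition smooth_on (U : R -> Prop) (k : R -> R) : Prop :=
  forall (n : nat) (x : R), U x -> ex_derive (Derive_n k n) x.

(* The level sets of t = v - k(r) are strictly spacelike in {r > r_+}:
   at every point of the chart (r > r_+, 0 < th < PI; v, ph arbitrary and
   irrelevant since the metric is independent of them), the metric restricted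
   to ker dt = {X | Xv - k'(r) Xr = 0} is negative definite
   (signature (+,-,-,-)). *)
Definition level_sets_spacelike (M a : R) (k : R -> R) : Prop :=
  forall r th : R, rplus M a < r -> 0 < th < PI ->
  forall Xv Xr Xth Xph : R,
    Xv - Derive k r * Xr = 0 ->
    (Xv <> 0 \/ Xr <> 0 \/ Xth <> 0 \/ Xph <> 0) ->
    kerr_g M a r th Xv Xr Xth Xph < 0.

Definition horizon_crossing (M a : R) (k : R -> R) : Prop :=
  (exists U : R -> Prop, open U /\ (forall r, rplus M a <= r -> U r) /\ smooth_on U k)
  /\ level_sets_spacelike M a k
  /\ (exists C R0 : R, forall r, R0 <= r ->
        Rabs (Derive k r - (a ^ 2 + r ^ 2) / Delta M a r) <= C / r ^ 2).

Definition h_hor (M a Chyp r : R) : R :=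
  let rp := rplus M a in
  2 * (r - rp) + 4 * M * ln (r / rp)
  + 3 * M ^ 2 * (rp - r) ^ 2 / (rp * r ^ 2)
  + 2 * M * atan ((Chyp - 1) * M / r)
  - 2 * M * atan ((Chyp - 1) * M / rp).

Definition k_hor (M a Chyp : R) (r : R) : R := h_hor M a Chyp r / 2.

(* Main.v *)
Require Import Defs.
From Stdlib Require Import Reals.
From Coquelicot Require Import Coquelicot.
From Stdlib Require Import Lra Lia Psatz.
Open Scope R_scope.

Inductive ex : Type := EC (c:R) | EX | EU | EW | EAdd (e1 e2 : ex) | EMul (e1 e2 : ex).

Fixpoint ev (b : R) (e : ex) (x : R) : R :=
  match e with
  | EC c => c | EX => x | EU => / x | EW => / (x ^ 2 + b ^ 2)
  | EAdd e1 e2 => ev b e1 x + ev b e2 x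
  | EMul e1 e2 => ev b e1 x * ev b e2 x end.

Fixpoint der (e : ex) : ex :=
  match e with
  | EC _ => EC 0 | EX => EC 1 | EU => EMul (EC (-1)) (EMul EU EU)
  | EW => EMul (EC (-2)) (EMul EX (EMul EW EW))
  | EAdd e1 e2 => EAdd (der e1) (der e2)
  | EMul e1 e2 => EAdd (EMul (der e1) e2) (EMul e1 (der e2)) end.

Fixpoint dern (n : nat) (e : ex) : ex :=
  match n with O => e | S n => dern n (der e) end.

Lemma ev_der b e x : 0 < x -> is_derive (ev b e) x (ev b (der e) x).
Proof.
  intros Hx. induction e; simpl.
  - apply (is_derive_const c).
  - apply (is_derive_id x).
  - auto_derive; [lra|]. field; lra.
  - assert (0 < x^2 + b^2) by nra.
    auto_derive; [lra|]. field; lra.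
  - apply (is_derive_plus (ev b e1) (ev b e2)); auto.
  - eapply is_derive_ext. { intro t; reflexivity. }
    replace (ev b (der e1) x * ev b e2 x + ev b e1 x * ev b (der e2) x)
      with (ev b (der e1) x * ev b e2 x + ev b e1 x * ev b (der e2) x) by ring.
    apply (is_derive_mult (ev b e1) (ev b e2)); auto.
    intros; apply Rmult_comm.
Qed.

Lemma loc_pos (x : R) (P : R -> Prop) : 0 < x -> (forall y, 0 < y -> P y) -> locally x P.
Proof.
  intros Hx H. apply (open_gt 0) in Hx. eapply filter_imp; [|exact Hx]. exact H.
Qed.

Lemma Derive_ev b e x : 0 < x -> Derive (ev b e) x = ev b (der e) x.
Proof. intros; apply is_derive_unique, ev_der; auto. Qed.

Lemma Derive_n_ev b n : forall e x, 0 < x -> Derive_n (ev b e) n x = ev b (dern n e) x.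
Proof.
  induction n; intros e x Hx; [reflexivity|].
  simpl dern.
  replace (Derive_n (ev b e) (S n) x) with (Derive_n (ev b e) (n+1) x) by (rewrite Nat.add_1_r; reflexivity).
  rewrite <- (Derive_n_comp _ n 1). rewrite <- IHn by auto.
  apply Derive_n_ext_loc. apply loc_pos; auto.
  intros y Hy; simpl. apply Derive_ev; auto.
Qed.

Lemma smooth_of_deriv (k : R -> R) b e :
  (forall x, 0 < x -> is_derive k x (ev b e x)) ->
  smooth_on (fun x => 0 < x) k.
Proof.
  intros Hk n x Hx. destruct n.
  - simpl. eexists; apply Hk; auto.
  - apply ex_derive_ext_loc with (f := ev b (dern n e)).
    + apply loc_pos; auto. intros y Hy.
      rewrite <- Derive_n_ev by auto.
      replace (S n) with (n+1)%nat by (rewrite Nat.add_1_r; reflexivity).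
      rewrite <- (Derive_n_comp _ n 1).
      apply Derive_n_ext_loc. apply loc_pos; auto.
      intros z Hz. simpl. symmetry; apply is_derive_unique, Hk; auto.
    + eexists; apply ev_der; auto.
Qed.

Definition Kexp (M rp c : R) : ex :=
  EAdd (EC 1) (EAdd (EMul (EC (2*M)) EU)
   (EAdd (EMul (EC (3*M^2)) (EMul (EAdd EX (EC (-rp))) (EMul EU (EMul EU EU))))
     (EMul (EC (- (c * M^2))) EW))).

Lemma k_deriv M a Chyp x : 0 < rplus M a -> 0 < x ->
  is_derive (k_hor M a Chyp) x (ev ((Chyp-1)*M) (Kexp M (rplus M a) (Chyp-1)) x).
Proof.
  intros Hp Hx. unfold k_hor, h_hor. set (rp := rplus M a). fold rp in Hp.
  simpl.
  assert (0 < x*x + ((Chyp-1)*M)*((Chyp-1)*M)) by (pose proof (Rle_0_sqr ((Chyp-1)*M)); unfold Rsqr in *; pose proof (Rmult_lt_0_compat x x Hx Hx); lra).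
  auto_derive.
  - repeat split; try lra; try (apply Rdiv_lt_0_compat; lra); try (apply Rgt_not_eq; apply Rmult_lt_0_compat; [lra|nra]).
  - match goal with |- ?l = ?r => change (@eq R l r) end.
    field. repeat split; try lra.
    all: match goal with |- ?g => idtac g end.
Qed.

Lemma Dk M a Chyp r : 0 < rplus M a -> 0 < r ->
  Derive (k_hor M a Chyp) r =
  1 + 2*M*(/r) + 3*M^2*(r - rplus M a)*(/r)^3 - (Chyp-1)*M^2 * / (r^2 + ((Chyp-1)*M)^2).
Proof.
  intros Hp Hr. rewrite (is_derive_unique _ _ _ (k_deriv M a Chyp r Hp Hr)).
  simpl. field. split; [|lra].
  assert (0 < r^2 + ((Chyp-1)*M)^2) by (pose proof (pow2_ge_0 ((Chyp-1)*M)); pose proof (pow_lt r 2 Hr); lra). lra.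
Qed.

Lemma quad_neg A B C x y : C < 0 -> A*C - B^2 > 0 -> (x<>0 \/ y<>0) ->
  A*x^2 + 2*B*x*y + C*y^2 < 0.
Proof.
  intros HC HD Hxy.
  assert (E : C*(A*x^2 + 2*B*x*y + C*y^2) = (C*y + B*x)^2 + (A*C-B^2)*x^2) by ring.
  destruct (Req_dec x 0) as [->|Hx].
  - destruct Hxy as [|Hy]; [lra|]. assert (0 < y^2) by (apply pow2_gt_0; auto). nra.
  - assert (0 < x^2) by (apply pow2_gt_0; auto).
    assert (0 <= (C*y + B*x)^2) by apply pow2_ge_0.
    assert (0 < C*(A*x^2 + 2*B*x*y + C*y^2)) by nra.
    nra.
Qed.

Lemma g_neg M a r th D Xv Xr Xth Xph : 0 < M -> 0 < r -> 0 < Defs.Delta M a r -> 0 < sin th ->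
  1 <= D -> D * Defs.Delta M a r < 2*r^2 + a^2 -> Xv = D * Xr ->
  (Xv <> 0 \/ Xr <> 0 \/ Xth <> 0 \/ Xph <> 0) ->
  kerr_g M a r th Xv Xr Xth Xph < 0.
Proof.
  intros HM Hr HD Hs HD1 HD2 HXv Hne.
  pose proof (sin2_cos2 th) as Hsc. unfold Rsqr in Hsc.
  set (s2 := sin th ^ 2).
  assert (Hs2 : 0 < s2) by (apply pow2_gt_0; lra).
  assert (Hc : cos th ^ 2 = 1 - s2) by (unfold s2; simpl; lra).
  set (De := Defs.Delta M a r) in *.
  assert (HS : Sigma a r th = r^2 + a^2*(1-s2)) by (unfold Sigma; rewrite Hc; ring).
  assert (Hs21 : s2 <= 1) by (unfold s2; pose proof (pow2_ge_0 (cos th)); simpl in *; lra).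
  assert (HSp : 0 < Sigma a r th) by (rewrite HS; pose proof (pow2_ge_0 a); pose proof (pow_lt r 2 Hr); nra).
  set (S := Sigma a r th) in *.
  set (A' := -2*S*D + (De - a^2*s2)*D^2).
  set (B' := a*s2*(S + 2*M*r*D)).
  set (C' := s2*(a^2*s2*De - (a^2+r^2)^2)).
  assert (Hg : S * kerr_g M a r th Xv Xr Xth Xph =
     A'*Xr^2 + 2*B'*Xr*Xph + C'*Xph^2 - S^2*Xth^2).
  { unfold kerr_g; cbv zeta. fold S. fold De. fold s2. rewrite HXv. unfold A', B', C'. field. lra. }
  assert (Hdet : A'*C' - B'^2 = - s2 * S^2 * (De*D^2 - 2*(r^2+a^2)*D + a^2*s2)).
  { unfold A', B', C'. rewrite HS. unfold De, Defs.Delta. ring. }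
  assert (Hf : De*D^2 - 2*(r^2+a^2)*D + a^2*s2 < 0).
  { assert (E : De*D^2 - 2*(r^2+a^2)*D + a^2*s2 = D*(D*De - 2*r^2 - a^2) + a^2*(s2 - D)) by ring.
    rewrite E. pose proof (pow2_ge_0 a). nra. }
  assert (HC : C' < 0).
  { unfold C'.
    assert (a^2*s2*De <= a^2*De).
    { assert (0 <= a^2*De*(1-s2)) by (apply Rmult_le_pos; [apply Rmult_le_pos; [apply pow2_ge_0|lra]|lra]). nra. }
    assert (a^2*De < (a^2+r^2)^2).
    { unfold De, Defs.Delta. pose proof (pow2_ge_0 a). pose proof (pow_lt r 2 Hr).
      assert (0 <= M * a^2 * r) by (apply Rmult_le_pos; [apply Rmult_le_pos|]; lra).
      assert (0 < r^4) by (apply pow_lt; lra). nra. }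
    nra. }
  assert (Hdp : A'*C' - B'^2 > 0).
  { rewrite Hdet. replace (- s2 * S^2 * (De*D^2 - 2*(r^2+a^2)*D + a^2*s2)) with
      ((s2 * S^2) * (- (De*D^2 - 2*(r^2+a^2)*D + a^2*s2))) by ring.
    apply Rmult_lt_0_compat; [apply Rmult_lt_0_compat; [lra|apply pow2_gt_0; lra]|lra]. }
  assert (HSg : S * kerr_g M a r th Xv Xr Xth Xph < 0).
  { rewrite Hg. assert (0 <= S^2*Xth^2) by (apply Rmult_le_pos; apply pow2_ge_0).
    destruct (Req_dec Xr 0) as [Hr0|Hr0]; destruct (Req_dec Xph 0) as [Hp0|Hp0].
    - subst Xr Xph. rewrite Rmult_0_r in HXv. subst Xv.
      destruct Hne as [Hn|[Hn|[Hn|Hn]]]; try lra.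
      assert (0 < S^2*Xth^2) by (apply Rmult_lt_0_compat; apply pow2_gt_0; lra).
      simpl. nra.
    - pose proof (quad_neg A' B' C' Xr Xph HC Hdp ltac:(right; exact Hp0)). lra.
    - pose proof (quad_neg A' B' C' Xr Xph HC Hdp ltac:(left; exact Hr0)). lra.
    - pose proof (quad_neg A' B' C' Xr Xph HC Hdp ltac:(left; exact Hr0)). lra. }
  nra.
Qed.

Lemma D_bounds M rp c r : 0 < M -> 0 < rp -> rp < r -> 0 <= c ->
  let D := 1 + 2*M*(/r) + 3*M^2*(r - rp)*(/r)^3 - c*M^2 * / (r^2 + (c*M)^2) in
  1 <= D /\ D <= 1 + 2*M*(/r) + 3*M^2*(/r)^2.
Proof.
  intros HM Hp Hr Hc D.
  assert (Hr0 : 0 < r) by lra.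
  assert (Hb : 0 < r^2 + (c*M)^2) by (pose proof (pow2_ge_0 (c*M)); pose proof (pow_lt r 2 Hr0); lra).
  set (u := /r) in *. set (w := / (r^2 + (c*M)^2)) in *.
  assert (Hu : r * u = 1) by (unfold u; field; lra).
  assert (Hu0 : 0 < u) by (unfold u; apply Rinv_0_lt_compat; lra).
  assert (Hw : (r^2 + (c*M)^2) * w = 1) by (unfold w; field; lra).
  assert (Hw0 : 0 < w) by (unfold w; apply Rinv_0_lt_compat; lra).
  assert (HT1 : 0 <= 3*M^2*(r - rp)*u^3 <= 3*M^2*u^2).
  { assert (E : 3*M^2*(r - rp)*u^3 = 3*M^2*u^2 - 3*M^2*rp*u^3).
    { replace (3*M^2*u^2) with (3*M^2*u^2*(r*u)) by (rewrite Hu; ring). ring. }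
    split.
    - apply Rmult_le_pos; [apply Rmult_le_pos; [nra|lra]|]. apply pow_le; lra.
    - rewrite E. assert (0 <= 3*M^2*rp*u^3).
      { apply Rmult_le_pos; [|apply pow_le; lra]. nra. } lra. }
  assert (HT2 : 0 <= c*M^2*w <= 2*M*u).
  { split. { apply Rmult_le_pos; [|lra]. nra. }
    assert (E : 2*M*u - c*M^2*w = u*w*(M*(2*r^2 - c*M*r + 2*c^2*M^2))).
    { replace (2*M*u) with (2*M*u*((r^2 + (c*M)^2) * w)) by (rewrite Hw; ring).
      replace (c*M^2*w) with (c*M^2*w*(r*u)) at 1 by (rewrite Hu; ring). ring. }
    assert (0 <= 2*r^2 - c*M*r + 2*c^2*M^2) by nra.
    assert (0 <= u*w*(M*(2*r^2 - c*M*r + 2*c^2*M^2))).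
    { apply Rmult_le_pos; [nra|]. apply Rmult_le_pos; lra. }
    lra. }
  unfold D. split; [|]; nra.
Qed.

Theorem lemma2p22 (M a Chyp : R) :
  0 < M -> Rabs a < M -> 1 <= Chyp ->
  horizon_crossing M a (k_hor M a Chyp) /\ k_hor M a Chyp (rplus M a) = 0.
Proof.
  intros HM Ha HC.
  apply Rabs_def2 in Ha.
  assert (Ha2 : a^2 < M^2) by nra.
  set (sq := sqrt (M^2 - a^2)).
  assert (Hsq0 : 0 <= sq) by apply sqrt_pos.
  assert (Hsq2 : sq * sq = M^2 - a^2) by (apply sqrt_sqrt; lra).
  assert (HsqM : sq <= M).
  { destruct (Rle_or_lt sq M) as [|Hge]; auto. pose proof (pow2_ge_0 a).
    assert (M*M < sq*sq) by (apply Rmult_le_0_lt_compat; lra). simpl in *. nra. }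
  assert (Hrp : rplus M a = M + sq) by reflexivity.
  set (rp := rplus M a) in *.
  assert (Hp : 0 < rp) by lra.
  set (c := Chyp - 1).
  assert (Hc : 0 <= c) by (unfold c; lra).
  assert (HDel : forall r, rp < r -> 0 < Defs.Delta M a r).
  { intros r Hr. unfold Defs.Delta.
    replace (r^2 - 2*M*r + a^2) with ((r - M - sq)*(r - M + sq)) by
      (assert (E: (r-M-sq)*(r-M+sq) = r^2 - 2*M*r + M^2 - sq*sq) by ring; rewrite Hsq2 in E; rewrite E; ring).
    apply Rmult_lt_0_compat; lra. }
  split; [split; [|split]|].
  - exists (fun x => 0 < x). split; [apply open_gt|]. split.
    + intros r Hr; change (rp <= r) in Hr; lra.
    + apply (smooth_of_deriv _ ((Chyp-1)*M) (Kexp M rp (Chyp-1))).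
      intros x Hx. apply k_deriv; auto.
  - intros r th Hr Hth Xv Xr Xth Xph HX Hne. change (rp < r) in Hr.
    assert (Hr0 : 0 < r) by lra.
    pose proof (D_bounds M rp c r HM Hp Hr Hc) as [HD1 HD2]. cbv zeta in HD1, HD2.
    pose proof (Dk M a Chyp r Hp Hr0) as HDk. fold rp c in HDk.
    rewrite <- HDk in HD1, HD2.
    apply (g_neg M a r th (Derive (k_hor M a Chyp) r)); auto; try lra.
    + apply sin_gt_0; lra.
    + pose proof (HDel r Hr) as HDe.
      set (D := Derive (k_hor M a Chyp) r) in *.
      set (u := /r) in *.
      assert (Hu : r * u = 1) by (unfold u; field; lra).
      assert (Hu0 : 0 < u) by (unfold u; apply Rinv_0_lt_compat; lra).
      assert (HP : Defs.Delta M a r * (r^2 + 2*M*r + 3*M^2) < r^2 * (2*r^2 + a^2)).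
      { unfold Defs.Delta.
        assert (M <= r) by lra.
        assert (M^4 <= r^4) by (apply pow_incr; lra).
        assert (M^2 <= r^2) by (apply pow_incr; lra).
        assert (2*M*a^2*r <= 2*M*M^2*r) by (apply Rmult_le_compat_r; [lra|]; nra).
        assert (3*M^2*a^2 <= 3*M^2*M^2) by nra.
        assert (4*M^3*M <= 4*M^3*r) by (apply Rmult_le_compat_l; [|lra]; simpl; nra).
        assert (0 < M^4) by (apply pow_lt; lra).
        simpl in *. nra. }
      assert (E : 1 + 2*M*u + 3*M^2*u^2 = (r^2 + 2*M*r + 3*M^2) * u^2).
      { replace 1 with ((r*u)^2) by (rewrite Hu; ring).
        replace (2*M*u) with (2*M*u*(r*u)) by (rewrite Hu; ring). ring. }
      rewrite E in HD2.
      assert (D * Defs.Delta M a r <= (r^2 + 2*M*r + 3*M^2) * u^2 * Defs.Delta M a r)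
        by (apply Rmult_le_compat_r; lra).
      assert (Hu2 : 0 < u^2) by (apply pow_lt; lra).
      assert (H2 : (r^2 + 2*M*r + 3*M^2) * u^2 * Defs.Delta M a r < r^2 * (2*r^2 + a^2) * u^2) by nra.
      replace (r^2 * (2*r^2 + a^2) * u^2) with ((2*r^2+a^2)*(r*u)^2) in H2 by ring.
      rewrite Hu in H2. lra.
  - exists ((13 + c) * M^2), (4*M). intros r Hr.
    assert (Hr0 : 0 < r) by lra.
    assert (Hrr : rp < r) by lra.
    pose proof (D_bounds M rp c r HM Hp Hrr Hc) as [HD1 HD2]. cbv zeta in HD1, HD2.
    rewrite (Dk M a Chyp r Hp Hr0). fold rp c.
    pose proof (HDel r Hrr) as HDe.
    set (De := Defs.Delta M a r) in *.
    assert (HDe2 : r^2/2 <= De).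
    { unfold De, Defs.Delta. pose proof (pow2_ge_0 a). simpl. nra. }
    set (u := /r) in *.
    assert (Hu : r * u = 1) by (unfold u; field; lra).
    assert (Hu0 : 0 < u) by (unfold u; apply Rinv_0_lt_compat; lra).
    assert (HMu : M * u <= 1/4).
    { replace (1/4) with (r*u/4) by (rewrite Hu; field). nra. }
    assert (Hb : r^2 <= r^2 + (c*M)^2) by (pose proof (pow2_ge_0 (c*M)); lra).
    assert (Hr2 : 0 < r^2) by (apply pow_lt; lra).
    assert (Hw : / (r^2 + (c*M)^2) <= u^2).
    { unfold u. rewrite <- Rinv_pow by lra. apply Rinv_le_contravar; lra. }
    assert (Hw0 : 0 < / (r^2 + (c*M)^2)) by (apply Rinv_0_lt_compat; lra).
    set (w := / (r^2 + (c*M)^2)) in *.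
    assert (Hv : / De <= 2 * u^2).
    { replace (2*u^2) with (/ (r^2/2)) by (unfold u; field; lra).
      apply Rinv_le_contravar; lra. }
    assert (Hv0 : 0 < / De) by (apply Rinv_0_lt_compat; lra).
    assert (HvD : De * / De = 1) by (field; lra).
    set (v := / De) in *.
    assert (Hdiv : (a^2 + r^2) / De = 1 + 2*M*r*v).
    { unfold Rdiv. fold v. replace (a^2 + r^2) with (De + 2*M*r) by (unfold De, Defs.Delta; ring).
      rewrite Rmult_plus_distr_r, HvD. ring. }
    rewrite Hdiv.
    assert (HE1 : 2*M*u - 2*M*r*v = -4*M^2*v + 2*M*a^2*u*v).
    { replace (2*M*u) with (2*M*u*(De*v)) by (rewrite HvD; ring).
      unfold De, Defs.Delta.
      replace (2*M*u*((r^2 - 2*M*r + a^2)*v)) with (2*M*r*v*(r*u) - 4*M^2*v*(r*u) + 2*M*a^2*u*v) by ring.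
      rewrite Hu. ring. }
    assert (B1 : 0 <= 4*M^2*v <= 8*M^2*u^2) by (split; nra).
    assert (B2 : 0 <= 2*M*a^2*u*v <= M^2*u^2).
    { split.
      - apply Rmult_le_pos; [|lra]. apply Rmult_le_pos; [|lra]. pose proof (pow2_ge_0 a). nra.
      - assert (2*M*a^2*u*v <= 2*M*M^2*u*(2*u^2)).
        { apply Rmult_le_compat; try lra.
          - apply Rmult_le_pos; [|lra]. pose proof (pow2_ge_0 a). nra.
          - apply Rmult_le_compat_r; [lra|]. apply Rmult_le_compat_l; lra. }
        replace (2*M*M^2*u*(2*u^2)) with (4*(M*u)*(M^2*u^2)) in H by ring.
        assert (0 <= M^2*u^2) by (apply Rmult_le_pos; apply pow2_ge_0).
        nra. }
    assert (B3 : 0 <= 3*M^2*(r - rp)*u^3 <= 3*M^2*u^2).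
    { assert (E : 3*M^2*(r - rp)*u^3 = 3*M^2*u^2 - 3*M^2*rp*u^3).
      { replace (3*M^2*u^2) with (3*M^2*u^2*(r*u)) by (rewrite Hu; ring). ring. }
      split.
      - apply Rmult_le_pos; [apply Rmult_le_pos; [nra|lra]|]. apply pow_le; lra.
      - rewrite E. assert (0 <= 3*M^2*rp*u^3).
        { apply Rmult_le_pos; [|apply pow_le; lra]. nra. } lra. }
    assert (B4 : 0 <= c*M^2*w <= c*M^2*u^2).
    { split. { apply Rmult_le_pos; [|lra]. apply Rmult_le_pos; [lra|apply pow2_ge_0]. }
      apply Rmult_le_compat_l; [|lra]. apply Rmult_le_pos; [lra|apply pow2_ge_0]. }
    replace ((13 + c) * M^2 / r^2) with ((13 + c) * M^2 * u^2) by (unfold u; field; lra).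
    apply Rabs_le.
    assert (0 <= c*M^2*u^2) by (apply Rmult_le_pos; [apply Rmult_le_pos; [lra|apply pow2_ge_0]|apply pow2_ge_0]).
    assert (0 <= M^2*u^2) by (apply Rmult_le_pos; apply pow2_ge_0).
    split; nra.
  - unfold k_hor, h_hor. fold rp. replace (rp / rp) with 1 by (field; lra). rewrite ln_1.
    field. lra.
Qed.
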